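(* Consider an instance with $n$ agents, $m$ divisible items and binary additive valuations (notation as in the context). For any two stable fractional allocations $x,x'$, their profiles are equal: $\mathbf{p}(x)=\mathbf{p}(x')$ (Chebyshev distance $0$).
   Context: Agents $[n]$, items $[m]$; each agent $i$ has a set $L_i\subseteq[m]$ of liked items. A fractional allocation is a matrix $x=(x_{o,i})$ with $x_{o,i}\ge0$ and $\sum_i x_{o,i}\le1$ for each item $o$; agent $i$'s value is $\sum_{o\in L_i}x_{o,i}$. $x$ is clean if $x_{o,i}=0$ whenever $o\notin L_i$, and max-USW if it maximizes the sum of agents' values. Throughout, allocations are clean and max-USW. Profile $\mathbf{p}(x)=(h_1,\dots,h_n)$ with $h_i=\sum_o x_{o,i}$. A transfer $u\to v$: distinct agents $u=i_1,\dots,i_k=v$ ($k\ge2$), items $o_1,\dots,o_{k-1}$ with $x_{o_l,i_l}>0$ and $o_l\in L_{i_{l+1}}$, amount $0<\Delta\le\min_l x_{o_l,i_l}$, moving $\Delta$ of $o_l$ from $i_l$ to $i_{l+1}$; narrowing if $h_u-\Delta\ge h_v+\Delta$. $x$ is stable if it admits no narrowing transfer. *)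

(* Defs.v *)
From HB Require Import structures.
From mathcomp Require Import all_boot all_order all_algebra.
Set Implicit Arguments. Unset Strict Implicit. Unset Printing Implicit Defensive.
Import Order.TTheory GRing.Theory Num.Theory.
Local Open Scope ring_scope.

Section Alloc.
Variables (R : realFieldType) (n m : nat).
(* Agents are 'I_n, items are 'I_m; L i is the set of items liked by agent i.
   A (fractional) allocation is x : 'I_m -> 'I_n -> R, x o i = x_{o,i}. *)
Variable L : 'I_n -> {set 'I_m}.

Definition allocation (x : 'I_m -> 'I_n -> R) : Prop :=
  (forall o i, 0 <= x o i) /\ (forall o, \sum_(i < n) x o i <= 1).

Definition agent_value (x : 'I_m -> 'I_n -> R) (i : 'I_n) : R :=
  \sum_(o in L i) x o i.

Definition usw (x : 'I_m -> 'I_n -> R) : R := \sum_(i < n) agent_value x i.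

Definition clean (x : 'I_m -> 'I_n -> R) : Prop :=
  forall o i, o \notin L i -> x o i = 0.

Definition max_usw (x : 'I_m -> 'I_n -> R) : Prop :=
  allocation x /\ forall y, allocation y -> usw y <= usw x.

Definition profile (x : 'I_m -> 'I_n -> R) (i : 'I_n) : R := \sum_(o < m) x o i.

(* A transfer u -> v: distinct agents a_0, ..., a_{k+1} (k+2 >= 2 agents),
   items o_0, ..., o_k with x_{o_l, a_l} > 0 and o_l liked by a_{l+1},
   and amount 0 < d <= min_l x_{o_l, a_l}.  u = a_0, v = a_{k+1}. *)
Definition transfer (x : 'I_m -> 'I_n -> R) (k : nat)
    (a : 'I_k.+2 -> 'I_n) (o : 'I_k.+1 -> 'I_m) (d : R) : Prop :=
  injective a /\ 0 < d /\
  forall l : 'I_k.+1,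
    0 < x (o l) (a (widen_ord (leqnSn k.+1) l)) /\
    d <= x (o l) (a (widen_ord (leqnSn k.+1) l)) /\
    o l \in L (a (lift ord0 l)).

Definition narrowing (x : 'I_m -> 'I_n -> R) (k : nat)
    (a : 'I_k.+2 -> 'I_n) (o : 'I_k.+1 -> 'I_m) (d : R) : Prop :=
  transfer x a o d /\ profile x (a ord_max) + d <= profile x (a ord0) - d.

Definition stable (x : 'I_m -> 'I_n -> R) : Prop :=
  forall k (a : 'I_k.+2 -> 'I_n) (o : 'I_k.+1 -> 'I_m) (d : R),
    ~ narrowing x a o d.
End Alloc.

(* Main.v *)
Require Import Defs.
From HB Require Import structures.
From mathcomp Require Import all_boot all_order all_algebra.
From mathcomp Require Import lra.
Import Order.TTheory GRing.Theory Num.Theory.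
Local Open Scope ring_scope.
Set Implicit Arguments. Unset Strict Implicit.

Lemma pos_lb (R : realFieldType) (T : finType) (f : T -> R) :
  (forall t, 0 < f t) -> exists d : R, 0 < d /\ forall t, d <= f t.
Proof.
move=> Hf.
suff: forall s : seq T, exists d : R, 0 < d /\ forall t, t \in s -> d <= f t.
  by case/(_ (enum T)) => d [d0 Hd]; exists d; split => // t; apply: Hd; rewrite mem_enum.
elim=> [|t s [d [d0 Hd]]]; first by exists 1; split.
exists (Num.min d (f t)); split; first by rewrite lt_min d0 Hf.
move=> t'; rewrite inE => /orP [/eqP -> | Ht']; first by rewrite ge_min lexx orbT.
by rewrite ge_min Hd.
Qed.

Definition redge (R : realFieldType) n m (L : 'I_n -> {set 'I_m})
  (x : 'I_m -> 'I_n -> R) : rel 'I_n :=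
  fun i j => [exists o, (0 < x o i) && (o \in L j)].

Lemma key (R : realFieldType) n m (L : 'I_n -> {set 'I_m})
  (x : 'I_m -> 'I_n -> R) : stable L x ->
  forall u p, path (redge L x) u p -> uniq (u :: p) -> p != [::] ->
  profile x u <= profile x (last u p).
Proof.
move=> Hs u [//|w p'] Hp Hu _.
have Hpath := Hp.
move/(pathP u): Hp => Hp.
set k := size p'.
pose a : 'I_k.+2 -> 'I_n := fun l => nth u (u :: w :: p') l.
have [o0 _] : exists o0 : 'I_m, true.
  have := Hp 0%N isT; rewrite /redge /= => /existsP [o0 _]; by exists o0.
pose P (l : 'I_k.+1) := fun o => (0 < x o (a (widen_ord (leqnSn k.+1) l))) && (o \in L (a (lift ord0 l))).
pose o (l : 'I_k.+1) := odflt o0 [pick o | P l o].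
have Ho : forall l, P l (o l).
  move=> l; rewrite /o; case: pickP => [o1 //|Hn] /=.
  have := Hp l (ltn_ord l); rewrite /redge => /existsP [o1 Ho1].
  have := Hn o1; rewrite /P /a lift0 /=.
  by rewrite Ho1.
have Hinj : injective a.
  move=> l1 l2; rewrite /a => /eqP; rewrite nth_uniq //= => /eqP H.
  by apply: val_inj.
have [d0 [d0p Hd0]] := @pos_lb R _ (fun l => x (o l) (a (widen_ord (leqnSn k.+1) l))) 
  (fun l => proj1 (andP (Ho l))).
have Hlast : a ord_max = last u (w :: p') by rewrite /a (last_nth u) /=.
have Hfirst : a ord0 = u by [].
rewrite -Hlast -Hfirst.
rewrite leNgt; apply/negP => Hlt.
apply: (Hs k a o (Num.min d0 ((profile x (a ord0) - profile x (a ord_max)) / 2))).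
split.
  split=> //; split.
    by rewrite lt_min d0p /=; apply: divr_gt0 => //; rewrite subr_gt0.
  move=> l; have /andP [H1 H2] := Ho l; split=> //; split=> //.
  by rewrite ge_min Hd0.
set D := profile x (a ord0) - profile x (a ord_max).
have : Num.min d0 (D / 2) <= D / 2 by rewrite ge_min lexx orbT.
rewrite /D; lra.
Qed.
Lemma usw_clean (R : realFieldType) n m (L : 'I_n -> {set 'I_m})
  (x : 'I_m -> 'I_n -> R) : clean L x -> usw L x = \sum_i profile x i.
Proof.
move=> Hc; apply: eq_bigr => i _; rewrite /agent_value /profile big_mkcond /=.
by apply: eq_bigr => o _; case: ifP => // /negbT /Hc ->.
Qed.

Lemma half (R : realFieldType) (n m : nat) (L : 'I_n -> {set 'I_m})
    (x x' : 'I_m -> 'I_n -> R) :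
  clean L x -> max_usw L x -> stable L x ->
  clean L x' -> max_usw L x' -> stable L x' ->
  forall i : 'I_n, ~ (profile x' i < profile x i).
Proof.
move=> cx [[x0 x1] mx] sx cx' [[x'0 x'1] mx'] sx' i Hi.
pose e : rel 'I_n := fun j j' => [exists o, (x' o j < x o j) && (x o j' < x' o j')].
pose S := [set j | connect e i j].
have [v Sv Hv] : exists2 v, v \in S & profile x v < profile x' v.
  apply/exists_inP; case: (boolP [exists v in S, profile x v < profile x' v]) => // Hno; exfalso.
  have HS : forall j, j \in S -> profile x' j <= profile x j.
    move=> j Sj; rewrite leNgt; apply/negP => H; move/negP: Hno; apply; apply/exists_inP; exists j => //.
  pose b o := [exists j0 in S, x' o j0 < x o j0].
  pose y o j := if b o && (j \in S) then x o j else x' o j.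
  have yclean : clean L y.
    by move=> o j Hj; rewrite /y; case: ifP => _; [apply: cx|apply: cx'].
  have yalloc : allocation y.
    split; first by move=> o j; rewrite /y; case: ifP.
    move=> o; case Hb: (b o).
      apply: le_trans (x1 o); apply: ler_sum => j _; rewrite /y Hb /=.
      case: ifP => Sj //.
      case/exists_inP: Hb => j0 Sj0 Hj0.
      rewrite leNgt; apply/negP => Hj.
      have : j \in S.
        rewrite inE; apply: connect_trans (connect1 _); first by rewrite inE in Sj0; exact: Sj0.
        by apply/existsP; exists o; rewrite Hj0 Hj.
      by rewrite Sj.
    apply: le_trans (x'1 o); rewrite le_eqVlt; apply/orP; left; apply/eqP.
    by apply: eq_bigr => j _; rewrite /y Hb.
  have := mx' y yalloc.
  rewrite !usw_clean // /profile.
  have Hterm : forall o j, (if j \in S then x o j - x' o j else 0) <= y o j - x' o j.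
    move=> o j; rewrite /y; case Sj: (j \in S); last by rewrite andbF subrr.
    rewrite andbT; case Hb: (b o); first by [].
    rewrite subrr subr_le0 leNgt; apply/negP => H.
    by move/negbT: Hb => /negP; apply; apply/exists_inP; exists j.
  have Hsum : \sum_j (if j \in S then profile x j - profile x' j else 0)
       <= \sum_j \sum_o y o j - \sum_j \sum_o x' o j.
    rewrite -sumrB; apply: ler_sum => j _; rewrite -sumrB.
    case Sj: (j \in S) => /=.
      rewrite /profile -sumrB; apply: ler_sum => o _.
      by have := Hterm o j; rewrite Sj.
    rewrite -sumrB; apply: sumr_ge0 => o _.
    by have := Hterm o j; rewrite Sj.
  have Hpos : 0 < \sum_j (if j \in S then profile x j - profile x' j else 0).
    have Si : i \in S by rewrite inE connect0.
    rewrite (bigD1 i) //= Si.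
    have : 0 <= \sum_(j | j != i) (if j \in S then profile x j - profile x' j else 0).
      apply: sumr_ge0 => j _; case: ifP => // Sj; rewrite subr_ge0; exact: HS.
    move: Hi; lra.
  move: Hsum Hpos; lra.
have /connectP [p Hp Hvp] : connect e i v by rewrite inE in Sv.
move: Hv; rewrite Hvp; case: (shortenP Hp) => p' Hp' Hu _ Hv.
case: p' Hp' Hu Hv => [|w q] Hp' Hu Hv; first by move: Hi Hv => /= ; lra.
have sub1 : subrel e (redge L x).
  move=> j j' /existsP [o /andP [H1 H2]]; apply/existsP; exists o.
  rewrite (le_lt_trans (x'0 o j) H1) /=.
  apply/negPn/negP => Hn; move: H2; rewrite (cx' _ _ Hn) => H2.
  by rewrite ltNge x0 in H2.
have sub2 : subrel e (fun a b => redge L x' b a).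
  move=> j j' /existsP [o /andP [H1 H2]]; apply/existsP; exists o.
  rewrite (le_lt_trans (x0 o j') H2) /=.
  apply/negPn/negP => Hn; move: H1; rewrite (cx _ _ Hn) => H1.
  by rewrite ltNge x'0 in H1.
have K1 := key sx (sub_path sub1 Hp') Hu isT.
have Hp2 : path (redge L x') (last i (w :: q)) (rev (belast i (w :: q))).
  rewrite rev_path.
  exact: (sub_path sub2 Hp').
have Hu2 : uniq (last i (w :: q) :: rev (belast i (w :: q))).
  by rewrite -rev_rcons -lastI rev_uniq.
have Hne : rev (belast i (w :: q)) != [::] by rewrite /= rev_cons; case: (rev _).
have K2 := key sx' Hp2 Hu2 Hne.
move: K2; rewrite /= rev_cons last_rcons => K2.
move: K1 K2 Hi Hv; lra.
Qed.

Theorem theorem4 (R : realFieldType) (n m : nat) (L : 'I_n -> {set 'I_m})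
    (x x' : 'I_m -> 'I_n -> R) :
  clean L x -> max_usw L x -> stable L x ->
  clean L x' -> max_usw L x' -> stable L x' ->
  forall i : 'I_n, profile x i = profile x' i.
Proof.
move=> cx mx sx cx' mx' sx' i; apply/eqP; rewrite eq_le.
by rewrite !leNgt; apply/andP; split; apply/negP => H;
  [apply: (half cx mx sx cx' mx' sx' H) | apply: (half cx' mx' sx' cx mx sx H)].
Qed.
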